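(* In the setting described in the context, let $F$ be strongly convex with respect to $\|\cdot\|_L$ with convexity parameter $\mu>0$. If $x_k$ is the random point generated by UCDC$(x_0)$, then $$\mathbf{E}[F(x_k)-F^*]\leq\left(1-\frac{1-\gamma_\mu}{n}\right)^k(F(x_0)-F^* ),$$ where $\gamma_\mu=1-\frac\mu4$ if $\mu\leq2$ and $\gamma_\mu=\frac1\mu$ otherwise.
   Context: Let $U\in\mathbf{R}^{N\times N}$ be a column permutation of the $N\times N$ identity matrix, partitioned as $U=[U_1,\dots,U_n]$ with $U_i\in\mathbf{R}^{N\times N_i}$, $\sum_iN_i=N$. For $x\in\mathbf{R}^N$ write $x^{(i)}=U_i^Tx$. Each $\mathbf{R}^{N_i}$ carries the norm $\|t\|_{(i)}=\langle B_it,t\rangle^{1/2}$ and dual norm $\|t\|_{(i)}^*=\langle B_i^{-1}t,t\rangle^{1/2}$ with $B_i$ positive definite. Consider minimizing $F(x)=f(x)+\Psi(x)$ over $\mathbf{R}^N$, where $f$ is convex and differentiable with $\|\nabla_if(x+U_it)-\nabla_if(x)\|_{(i)}^*\leq L_i\|t\|_{(i)}$ for all $x,t,i$ (constants $L_i>0$, $\nabla_if(x)=U_i^T\nabla f(x)$), and $\Psi(x)=\sum_i\Psi_i(x^{(i)})$ with each $\Psi_i$ proper closed convex. The problem has a minimizer; $F^*$ is the optimal value. Let $\|x\|_L=(\sum_iL_i\|x^{(i)}\|_{(i)}^2)^{1/2}$. Strong convexity w.r.t. $\|\cdot\|_L$ with parameter $\mu$: $F(x)\geq F(y)+\langle F'(y),x-y\rangle+\frac\mu2\|x-y\|_L^2$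 for all $x,y\in\mathrm{dom}\,F$ and all subgradients $F'(y)$. Algorithm UCDC$(x_0)$: for $k=0,1,2,\dots$, choose $i\in\{1,\dots,n\}$ uniformly at random (independently), compute $T^{(i)}(x_k)=\arg\min_{t\in\mathbf{R}^{N_i}}\{\langle\nabla_if(x_k),t\rangle+\frac{L_i}{2}\|t\|_{(i)}^2+\Psi_i(x_k^{(i)}+t)\}$ and set $x_{k+1}=x_k+U_iT^{(i)}(x_k)$. *)

(* Defs.v *)
From HB Require Import structures.
From mathcomp Require Import all_boot all_order all_algebra.
From mathcomp Require Import all_classical all_reals all_analysis.
Set Implicit Arguments. Unset Strict Implicit. Unset Printing Implicit Defensive.
Import Order.TTheory GRing.Theory Num.Theory.
Import numFieldNormedType.Exports.
Local Open Scope ring_scope.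

Definition inner (R : realType) m (g h : 'cV[R]_m) : R := (g^T *m h) 0 0.

Definition qform (R : realType) m (B : 'M[R]_m) (t : 'cV[R]_m) : R :=
  inner (B *m t) t.

Definition posdef (R : realType) m (B : 'M[R]_m) : Prop :=
  B^T = B /\ forall t : 'cV[R]_m, t != 0 -> 0 < qform B t.

Definition bnorm (R : realType) m (B : 'M[R]_m) (t : 'cV[R]_m) : R :=
  Num.sqrt (qform B t).
Definition dnorm (R : realType) m (B : 'M[R]_m) (t : 'cV[R]_m) : R :=
  Num.sqrt (qform (invmx B) t).

(* U_i : the i-th column block of U : 'M_(N, N_1 + ... + N_n) *)
Definition Ublk (R : realType) (n : nat) (Ns : 'I_n -> nat) m
  (U : 'M[R]_(m, \sum_(i < n) Ns i)) (i : 'I_n) : 'M[R]_(m, Ns i) :=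
  submxrow (q_ := Ns) U i.

Definition blk (R : realType) (n : nat) (Ns : 'I_n -> nat) m
  (U : 'M[R]_(m, \sum_(i < n) Ns i)) (i : 'I_n) (x : 'cV[R]_m) : 'cV[R]_(Ns i) :=
  (Ublk U i)^T *m x.

Definition grad (R : realType) m (f : 'cV[R]_m -> R) (x : 'cV[R]_m) : 'cV[R]_m :=
  \col_j ('D_(delta_mx j 0) f x).

Definition convex_fun (R : realType) m (f : 'cV[R]_m -> R) : Prop :=
  forall (x y : 'cV[R]_m) (l : R), 0 <= l <= 1 ->
    f (l *: x + (1 - l) *: y) <= l * f x + (1 - l) * f y.

Local Open Scope ereal_scope.

Definition econvex (R : realType) m (g : 'cV[R]_m -> \bar R) : Prop :=
  forall (x y : 'cV[R]_m) (l : R), (0 < l < 1)%R ->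
    g (l *: x + (1 - l) *: y)%R <= l%:E * g x + (1 - l)%:E * g y.

Definition proper_fun (R : realType) m (g : 'cV[R]_m -> \bar R) : Prop :=
  (forall x, g x != -oo) /\ (exists x, g x \is a fin_num).

Definition proper_closed_convex (R : realType) m (g : 'cV[R]_m -> \bar R) : Prop :=
  [/\ proper_fun g, lower_semicontinuous g & econvex g].

Definition Fobj (R : realType) (n : nat) (Ns : 'I_n -> nat)
  (U : 'M[R]_(\sum_(i < n) Ns i))
  (f : 'cV[R]_(\sum_(i < n) Ns i) -> R) (Psi : forall i : 'I_n, 'cV[R]_(Ns i) -> \bar R)
  (x : 'cV[R]_(\sum_(i < n) Ns i)) : \bar R :=
  (f x)%:E + \sum_(i < n) Psi i (blk U i x).

Definition sqnormL (R : realType) (n : nat) (Ns : 'I_n -> nat) m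
  (U : 'M[R]_(m, \sum_(i < n) Ns i)) (B : forall i : 'I_n, 'M[R]_(Ns i))
  (L : 'I_n -> R) (x : 'cV[R]_m) : R :=
  (\sum_(i < n) L i * (bnorm (B i) (blk U i x)) ^+ 2)%R.

Definition subgrad (R : realType) m (F : 'cV[R]_m -> \bar R) (y g : 'cV[R]_m) : Prop :=
  forall x, F y + (inner g (x - y)%R)%:E <= F x.

Definition strongly_convex_L (R : realType) (n : nat) (Ns : 'I_n -> nat) m
  (U : 'M[R]_(m, \sum_(i < n) Ns i)) (B : forall i : 'I_n, 'M[R]_(Ns i))
  (L : 'I_n -> R) (F : 'cV[R]_m -> \bar R) (mu : R) : Prop :=
  forall x y : 'cV[R]_m, F x < +oo -> F y < +oo ->
    forall g, subgrad F y g ->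
      F y + (inner g (x - y)%R)%:E + (mu / 2 * sqnormL U B L (x - y)%R)%:E <= F x.

(* the function minimized to get T^(i)(x):
   <grad_i f(x), t> + L_i/2 ||t||_(i)^2 + Psi_i(x^(i) + t) *)
Definition Tobj (R : realType) (n : nat) (Ns : 'I_n -> nat)
  (U : 'M[R]_(\sum_(i < n) Ns i))
  (f : 'cV[R]_(\sum_(i < n) Ns i) -> R) (Psi : forall i : 'I_n, 'cV[R]_(Ns i) -> \bar R)
  (B : forall i : 'I_n, 'M[R]_(Ns i)) (L : 'I_n -> R)
  (i : 'I_n) (x : 'cV[R]_(\sum_(i < n) Ns i)) (t : 'cV[R]_(Ns i)) : \bar R :=
  (inner (blk U i (grad f x)) t + L i / 2 * (bnorm (B i) t) ^+ 2)%:E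
  + Psi i (blk U i x + t)%R.

(* iterate of UCDC: x_{k} for the sequence of chosen blocks s = (i_0, ..., i_{k-1}) *)
Definition ucdc_iter (R : realType) (n : nat) (Ns : 'I_n -> nat)
  (U : 'M[R]_(\sum_(i < n) Ns i))
  (T : forall i : 'I_n, 'cV[R]_(\sum_(i < n) Ns i) -> 'cV[R]_(Ns i))
  (x0 : 'cV[R]_(\sum_(i < n) Ns i)) (s : seq 'I_n) : 'cV[R]_(\sum_(i < n) Ns i) :=
  foldl (fun x i => (x + Ublk U i *m T i x)%R) x0 s.

(* expectation over k independent uniform choices in {1..n} *)
Definition expect_unif (R : realType) (n k : nat) (X : k.-tuple 'I_n -> \bar R) : \bar R :=
  ((n ^ k)%:R^-1)%R%:E * \sum_(s : k.-tuple 'I_n) X s.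

Definition gamma_mu (R : realType) (mu : R) : R :=
  (if mu <= 2 then 1 - mu / 4 else mu^-1)%R.

Arguments Tobj {R n Ns} U f Psi B L i x t.

(* Main.v *)
Require Import Defs.
From HB Require Import structures.
From mathcomp Require Import all_boot all_order all_algebra.
From mathcomp Require Import all_classical all_reals all_analysis.
From mathcomp Require Import ring lra.
From mathcomp Require fingroup.
Import Order.TTheory GRing.Theory Num.Theory.
Import numFieldNormedType.Exports.
Set Implicit Arguments. Unset Strict Implicit. Unset Printing Implicit Defensive.
Local Open Scope ring_scope.

Lemma innerE (R : realType) m (a b : 'cV[R]_m) : inner a b = \sum_j a j 0 * b j 0.
Proof. by rewrite /inner mxE; apply: eq_bigr => j _; rewrite mxE. Qed.

Lemma innerC (R : realType) m (a b : 'cV[R]_m) : inner a b = inner b a.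
Proof. by rewrite !innerE; apply: eq_bigr => j _; rewrite mulrC. Qed.

Lemma innerDl (R : realType) m (a b c : 'cV[R]_m) : inner (a + b) c = inner a c + inner b c.
Proof. by rewrite !innerE -big_split; apply: eq_bigr => j _; rewrite mxE mulrDl. Qed.

Lemma innerZl (R : realType) m (k : R) (a c : 'cV[R]_m) : inner (k *: a) c = k * inner a c.
Proof. by rewrite !innerE mulr_sumr; apply: eq_bigr => j _; rewrite mxE mulrA. Qed.

Lemma innerDr (R : realType) m (a b c : 'cV[R]_m) : inner c (a + b) = inner c a + inner c b.
Proof. by rewrite !(innerC c) innerDl. Qed.

Lemma innerZr (R : realType) m (k : R) (a c : 'cV[R]_m) : inner c (k *: a) = k * inner c a.
Proof. by rewrite !(innerC c) innerZl. Qed.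

Lemma inner0r (R : realType) m (c : 'cV[R]_m) : inner c 0 = 0.
Proof. by rewrite innerE big1 // => j _; rewrite mxE mulr0. Qed.

Lemma inner0l (R : realType) m (c : 'cV[R]_m) : inner 0 c = 0.
Proof. by rewrite innerC inner0r. Qed.

Lemma innerNl (R : realType) m (a c : 'cV[R]_m) : inner (- a) c = - inner a c.
Proof. by rewrite -scaleN1r innerZl mulN1r. Qed.

Lemma innerNr (R : realType) m (a c : 'cV[R]_m) : inner c (- a) = - inner c a.
Proof. by rewrite -scaleN1r innerZr mulN1r. Qed.

Lemma innerBr (R : realType) m (a b c : 'cV[R]_m) : inner c (a - b) = inner c a - inner c b.
Proof. by rewrite innerDr innerNr. Qed.

Lemma innerBl (R : realType) m (a b c : 'cV[R]_m) : inner (a - b) c = inner a c - inner b c.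
Proof. by rewrite innerDl innerNl. Qed.

Lemma inner_sumr (R : realType) m (I : finType) (F : I -> 'cV[R]_m) c :
  inner c (\sum_i F i) = \sum_i inner c (F i).
Proof.
apply: (big_morph (inner c)); [by move=> x y; rewrite innerDr | exact: inner0r].
Qed.

Lemma inner_mul (R : realType) m p (g : 'cV[R]_m) (A : 'M[R]_(m, p)) (t : 'cV[R]_p) :
  inner g (A *m t) = inner (A^T *m g) t.
Proof. by rewrite /inner trmx_mul trmxK mulmxA. Qed.

Lemma qform_ge0 (R : realType) m (B : 'M[R]_m) t : posdef B -> 0 <= qform B t.
Proof.
move=> [_ hB]; have [->|t0] := eqVneq t 0.
  by rewrite /qform mulmx0 inner0l.
exact/ltW/hB.
Qed.

Lemma posdef_unit (R : realType) m (B : 'M[R]_m) : posdef B -> B \in unitmx.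
Proof.
move=> [hs hB]; rewrite unitmxE unitfE; apply/negP => /det0P [v v0 vB].
have : v^T != 0 by apply: contra v0 => /eqP h; rewrite -[v]trmxK h trmx0.
move=> /hB; rewrite /qform.
have -> : B *m v^T = 0 by rewrite -{1}hs -trmx_mul vB trmx0.
by rewrite inner0l ltxx.
Qed.

Lemma qformE (R : realType) m (B : 'M[R]_m) a b : posdef B ->
  inner (B *m a) b = inner (B *m b) a.
Proof.
move=> [hs _]; rewrite innerC inner_mul hs //.
Qed.

Lemma cs_B (R : realType) m (B : 'M[R]_m) (g t : 'cV[R]_m) : posdef B ->
  inner g t <= dnorm B g * bnorm B t.
Proof.
move=> hp; have hu := posdef_unit hp.
set u := invmx B *m g.
have gE : g = B *m u by rewrite mulKVmx.
have qu : qform (invmx B) g = qform B u.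
  by rewrite /qform -/u {1}gE innerC.
rewrite /dnorm /bnorm qu gE -sqrtrM; last exact: qform_ge0.
set c := inner (B *m u) t.
suff h : c ^+ 2 <= qform B u * qform B t.
  apply: (le_trans (ler_norm c)); rewrite -sqrtr_sqr.
  by rewrite ler_sqrt // mulr_ge0 // qform_ge0.
have [t0|t0] := eqVneq t 0.
  by rewrite /c t0 inner0r expr0n /= mulr_ge0 // qform_ge0.
have qt : 0 < qform B t by case: hp => _; apply.
set l := c / qform B t.
have h0 := qform_ge0 (u - l *: t) hp.
have : qform B (u - l *: t) = qform B u - 2 * l * c + l ^+ 2 * qform B t.
  rewrite /qform mulmxBr -scalemxAr innerBl !innerBr !innerZl !innerZr.
  rewrite (qformE t u hp) -/c; rewrite /qform; ring.
move=> e; rewrite e in h0.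
have : l ^+ 2 * qform B t = l * c by rewrite /l; field; rewrite gt_eqF.
move=> e2; rewrite e2 in h0.
have : l * c = c ^+ 2 / qform B t by rewrite /l; field; rewrite gt_eqF.
move=> e3; rewrite e3 in h0.
have h1 : c ^+ 2 / qform B t <= qform B u by lra.
by rewrite ler_pdivrMr in h1.
Qed.

Section Blocks.
Lemma perm_orth (R : realType) m (U : 'M[R]_m) :
  is_perm_mx U -> U^T *m U = 1%:M /\ U *m U^T = 1%:M.
Proof.
case/is_perm_mxP => s ->; rewrite tr_perm_mx -!perm_mxM -(perm_mx1 R m).
by split; congr perm_mx; apply/perm.permP => i; rewrite perm.permM ?perm.permK ?perm.permKV perm.perm1.
Qed.
End Blocks.

Lemma Ublk_row (R : realType) n (Ns : 'I_n -> nat) (U : 'M[R]_(\sum_(i < n) Ns i)) :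
  U = \mxrow_j Ublk U j.
Proof. by rewrite /Ublk submxrowK. Qed.

Lemma blk_block (R : realType) n (Ns : 'I_n -> nat) (U : 'M[R]_(\sum_(i < n) Ns i)) i j :
  (Ublk U j)^T *m Ublk U i = submxblock (U^T *m U) j i.
Proof.
by rewrite {3 4}(Ublk_row U) tr_mxrow mul_mxcol_mxrow mxblockK.
Qed.

Lemma blk_self (R : realType) n (Ns : 'I_n -> nat) (U : 'M[R]_(\sum_(i < n) Ns i)) i t :
  is_perm_mx U -> blk U i (Ublk U i *m t) = t.
Proof.
move=> /perm_orth [h _]; rewrite /blk mulmxA blk_block h.
rewrite -(mxdiagZ (p_ := Ns) 1) /mxdiag mxblockK eqxx conform_mx_id.
by rewrite mul1mx.
Qed.

Lemma blk_other (R : realType) n (Ns : 'I_n -> nat) (U : 'M[R]_(\sum_(i < n) Ns i)) i j t :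
  is_perm_mx U -> j != i -> blk U j (Ublk U i *m t) = 0.
Proof.
move=> /perm_orth [h _] ji; rewrite /blk mulmxA blk_block h.
rewrite -(mxdiagZ (p_ := Ns) 1) /mxdiag mxblockK (negPf ji).
by rewrite mul0mx.
Qed.

Lemma inner_blk (R : realType) n (Ns : 'I_n -> nat) (U : 'M[R]_(\sum_(i < n) Ns i)) g d :
  is_perm_mx U -> \sum_i inner (blk U i g) (blk U i d) = inner g d.
Proof.
move=> /perm_orth [_ h].
have : \sum_i (Ublk U i *m (Ublk U i)^T) = 1%:M.
  by rewrite -mul_mxrow_mxcol -tr_mxrow -Ublk_row.
move=> e.
rewrite -{2}(mul1mx d) -e mulmx_suml inner_sumr.
by apply: eq_bigr => i _; rewrite -mulmxA inner_mul.
Qed.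

Lemma blkD (R : realType) n (Ns : 'I_n -> nat) (U : 'M[R]_(\sum_(i < n) Ns i)) i x y :
  blk U i (x + y) = blk U i x + blk U i y.
Proof. by rewrite /blk mulmxDr. Qed.
Lemma blkB (R : realType) n (Ns : 'I_n -> nat) (U : 'M[R]_(\sum_(i < n) Ns i)) i x y :
  blk U i (x - y) = blk U i x - blk U i y.
Proof. by rewrite /blk mulmxBr. Qed.
Lemma blkZ (R : realType) n (Ns : 'I_n -> nat) (U : 'M[R]_(\sum_(i < n) Ns i)) i (a : R) x :
  blk U i (a *: x) = a *: blk U i x.
Proof. by rewrite /blk scalemxAr. Qed.

Lemma grad_inner (R : realType) m (f : 'cV[R]_m -> R) x v :
  differentiable f x -> inner (grad f x) v = 'd f x v.
Proof.
move=> df.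
rewrite innerE {2}(matrix_sum_delta v) linear_sum /=.
apply: eq_bigr => j _; rewrite big_ord1 linearZ /= mxE deriveE //.
by rewrite mulrC.
Qed.

Lemma conv_grad (R : realType) m (f : 'cV[R]_m -> R) x y :
  convex_fun f -> differentiable f x -> f x + 'd f x (y - x) <= f y.
Proof.
move=> cf df.
have dv : derivable f x (y - x) := diff_derivable df.
rewrite -deriveE //.
have hc : (h^-1 *: ((f \o shift x) (h *: (y - x)) - f x) @[h --> 0^'+] --> 'D_(y - x) f x)%classic.
  exact: (cvg_dnbhs_at_right dv).
suff : 'D_(y - x) f x <= f y - f x by lra.
rewrite -(cvg_lim _ hc) //; apply: limr_le; first exact: cvgP hc.
near=> h.
have h0 : 0 < h by near: h; exact: nbhs_right_gt.
have h1 : h <= 1 by near: h; apply: nbhs_right_le; exact: ltr01.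
rewrite /= /shift.
have := cf y x h; rewrite (ltW h0) h1 => /(_ isT).
have -> : h *: y + (1 - h) *: x = h *: (y - x) + x.
  by rewrite scalerBl scale1r scalerBr addrCA addrC.
move=> hle.
set a := f (h *: (y - x) + x) in hle *.
have -> : h^-1 *: (a - f x) = (a - f x) / h by rewrite mulrC.
rewrite ler_pdivrMr //; nra.
Unshelve. all: by end_near.
Qed.

Lemma line_deriv (R : realType) m (f : 'cV[R]_m -> R) (x v : 'cV[R]_m) (s : R) :
  (forall z, differentiable f z) ->
  is_derive s 1 (fun s => f (x + s *: v)) ('d f (x + s *: v) v).
Proof.
move=> df.
have E : (fun t : R => t^-1 *: (((fun s => f (x + s *: v)) \o shift s) (t *: 1) - f (x + s *: v)))
   = (fun t => t^-1 *: ((f \o shift (x + s *: v)) (t *: v) - f (x + s *: v))).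
  apply/funext => t /=; congr (_ *: (f _ - _)).
  by rewrite /shift /= scalerDl [t%:A]mulr1 addrCA addrA addrC.
split; first by rewrite /derivable E; exact: diff_derivable.
by rewrite /derive E -/(derive f _ v) deriveE.
Qed.

Lemma poly_deriv (R : realType) (c K : R) (s : R) :
  is_derive s 1 (fun s : R => s * c + K * (s * s)) (c + K * (s + s)).
Proof.
apply: is_derive_eq.
by rewrite scaler0 add0r /GRing.scale /= !mulr1.
Qed.

Lemma descent (R : realType) m (f : 'cV[R]_m -> R) (x v : 'cV[R]_m) (c M : R) :
  (forall z, differentiable f z) ->
  (forall s, 0 < s < 1 -> 'd f (x + s *: v) v - c <= M * s) ->
  f (x + v) <= f x + c + M / 2.
Proof.
move=> df hM.
pose phi := fun s : R => f (x + s *: v) - (s * c + M / 2 * (s * s)).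
have dphi : forall s : R, is_derive s (1 : R) phi ('d f (x + s *: v) v - (c + M / 2 * (s + s))).
  move=> s; exact: (is_deriveB (line_deriv x v s df) (poly_deriv c (M / 2) s)).
have cphi : continuous phi.
  move=> s; apply: differentiable_continuous; apply/derivable1_diffP.
  by case: (dphi s).
have := @ler0_derive1_nincr R phi 0 1.
move=> /(_ (fun s _ => ltac:(by case: (dphi s)))).
have : forall s, (s : R) \in `]0, 1[ -> derive1 phi s <= 0.
  move=> s; rewrite in_itv /= => hs.
  rewrite derive1E (@derive_val _ _ _ _ _ _ _ (dphi s)).
  have := hM s hs; lra.
move=> h /(_ h (continuous_subspaceT cphi) 0 1 (lexx _) ler01 (lexx _)).
rewrite /phi scale1r scale0r addr0 !mul0r !mul1r mulr0 addr0 subr0.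
lra.
Qed.

Lemma qformZ (R : realType) m (B : 'M[R]_m) (a : R) t :
  qform B (a *: t) = a ^+ 2 * qform B t.
Proof. by rewrite /qform -scalemxAr innerZl innerZr mulrA expr2. Qed.

Lemma bnorm_ge0 (R : realType) m (B : 'M[R]_m) t : 0 <= bnorm B t.
Proof. exact: sqrtr_ge0. Qed.

Lemma bnormZ (R : realType) m (B : 'M[R]_m) (a : R) t :
  bnorm B (a *: t) = `|a| * bnorm B t.
Proof. by rewrite /bnorm qformZ sqrtrM ?sqrtr_sqr // sqr_ge0. Qed.

Lemma block_descent (R : realType) n (Ns : 'I_n -> nat) (U : 'M[R]_(\sum_(i < n) Ns i))
  (B : forall i : 'I_n, 'M[R]_(Ns i)) (f : 'cV[R]_(\sum_(i < n) Ns i) -> R) (L : 'I_n -> R) i x t :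
  posdef (B i) -> (forall z, differentiable f z) -> 0 <= L i ->
  (forall (x : 'cV[R]_(\sum_(j < n) Ns j)) (t : 'cV[R]_(Ns i)),
     dnorm (B i) (blk U i (grad f (x + Ublk U i *m t)) - blk U i (grad f x))
       <= L i * bnorm (B i) t) ->
  f (x + Ublk U i *m t) <= f x + inner (blk U i (grad f x)) t + L i / 2 * bnorm (B i) t ^+ 2.
Proof.
move=> hB df hL hLip.
set v := Ublk U i *m t.
have := @descent R _ f x v (inner (blk U i (grad f x)) t) (L i * bnorm (B i) t ^+ 2) df.
have -> : L i * bnorm (B i) t ^+ 2 / 2 = L i / 2 * bnorm (B i) t ^+ 2 by rewrite mulrAC.
apply => s /andP [s0 s1].
rewrite -grad_inner // /v inner_mul -/(blk U i _) -innerBl.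
apply: (le_trans (cs_B _ _ hB)).
have := hLip x (s *: t); rewrite -scalemxAr => h1.
apply: (le_trans (ler_wpM2r (bnorm_ge0 _ _) h1)).
rewrite bnormZ ger0_norm ?(ltW s0) //.
by rewrite expr2 le_eqVlt; apply/orP; left; apply/eqP; ring.
Qed.

Lemma sqnormLZ (R : realType) n (Ns : 'I_n -> nat) (U : 'M[R]_(\sum_(i < n) Ns i))
  (B : forall i : 'I_n, 'M[R]_(Ns i)) (L : 'I_n -> R) (a : R) v :
  sqnormL U B L (a *: v) = a ^+ 2 * sqnormL U B L v.
Proof.
rewrite /sqnormL mulr_sumr; apply: eq_bigr => i _.
by rewrite blkZ bnormZ exprMn real_normK ?num_real //; ring.
Qed.

Lemma sqnormLN (R : realType) n (Ns : 'I_n -> nat) (U : 'M[R]_(\sum_(i < n) Ns i))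
  (B : forall i : 'I_n, 'M[R]_(Ns i)) (L : 'I_n -> R) v :
  sqnormL U B L (- v) = sqnormL U B L v.
Proof. by rewrite -scaleN1r sqnormLZ sqrrN expr1n mul1r. Qed.

Lemma sqnormL_ge0 (R : realType) n (Ns : 'I_n -> nat) (U : 'M[R]_(\sum_(i < n) Ns i))
  (B : forall i : 'I_n, 'M[R]_(Ns i)) (L : 'I_n -> R) v :
  (forall i, 0 <= L i) -> 0 <= sqnormL U B L v.
Proof. by move=> hL; apply: sumr_ge0 => i _; rewrite mulr_ge0 // sqr_ge0. Qed.

Local Open Scope ereal_scope.
Lemma le_fin (R : realType) (a b : \bar R) : a \is a fin_num -> b <= a -> b != -oo ->
  b \is a fin_num.
Proof.
move=> af ba bN; rewrite fin_numE bN /=; apply/negP => /eqP bE.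
by move: ba; rewrite bE leye_eq => /eqP aE; rewrite aE in af.
Qed.
Local Close Scope ereal_scope.

Lemma sum_tuple_cons (R : realType) n k (G : k.+1.-tuple 'I_n -> R) :
  \sum_(s : k.+1.-tuple 'I_n) G s = \sum_(i : 'I_n) \sum_(s : k.-tuple 'I_n) G [tuple of i :: s].
Proof.
rewrite pair_big (reindex (fun p : 'I_n * k.-tuple 'I_n => [tuple of p.1 :: p.2])) /=.
  by apply: eq_bigl.
exists (fun t => (thead t, [tuple of behead t])) => [[i s] _ | t _] /=.
  by congr pair; apply: val_inj.
by apply: val_inj; rewrite /= {3}(tuple_eta t).
Qed.

Lemma sum_tuple0 (R : realType) n (G : 0.-tuple 'I_n -> R) :
  \sum_(s : 0.-tuple 'I_n) G s = G [tuple].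
Proof. by rewrite (big_pred1 [tuple]) // => s; apply/esym/eqP; exact: tuple0. Qed.


Unset Implicit Arguments.

Theorem theorem6 (R : realType) (n : nat) (Ns : 'I_n -> nat)
  (U : 'M[R]_(\sum_(i < n) Ns i))
  (B : forall i : 'I_n, 'M[R]_(Ns i))
  (f : 'cV[R]_(\sum_(i < n) Ns i) -> R)
  (Psi : forall i : 'I_n, 'cV[R]_(Ns i) -> \bar R)
  (L : 'I_n -> R) (mu : R)
  (T : forall i : 'I_n, 'cV[R]_(\sum_(i < n) Ns i) -> 'cV[R]_(Ns i))
  (xstar x0 : 'cV[R]_(\sum_(i < n) Ns i)) (k : nat) :
  (0 < n)%N ->
  is_perm_mx U ->
  (forall i, posdef (B i)) ->
  convex_fun f ->
  (forall x, differentiable f x) ->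
  (forall i, 0 < L i) ->
  (forall i (x : 'cV[R]_(\sum_(j < n) Ns j)) (t : 'cV[R]_(Ns i)),
     dnorm (B i) (blk U i (grad f (x + Ublk U i *m t)) - blk U i (grad f x))
       <= L i * bnorm (B i) t) ->
  (forall i, proper_closed_convex (Psi i)) ->
  (forall x, (Fobj U f Psi xstar <= Fobj U f Psi x)%E) ->
  (forall i x (t : 'cV[R]_(Ns i)),
     (Tobj U f Psi B L i x (T i x) <= Tobj U f Psi B L i x t)%E) ->
  0 < mu ->
  strongly_convex_L U B L (Fobj U f Psi) mu ->
  (expect_unif (fun s : k.-tuple 'I_n =>
       Fobj U f Psi (ucdc_iter U T x0 s) - Fobj U f Psi xstar)
   <= ((1 - (1 - gamma_mu mu) / n%:R) ^+ k)%:E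
      * (Fobj U f Psi x0 - Fobj U f Psi xstar))%E.
Proof.
move=> n0 hU hB cf df hL hLip hPsi hmin hT mu0 hsc.
set F := Fobj U f Psi.
have PNy : forall i z, (Psi i z != -oo)%E.
  by move=> i z; case: (hPsi i) => -[h _] _ _; exact: h.
have FNy : forall x, (F x != -oo)%E.
  move=> x; rewrite /F /Fobj adde_eq_ninfty negb_or /=.
  apply/eqP => /esum_eqNyP [i [_ _ /eqP]]; exact/negP/PNy.
have Ffin : forall x, (F x \is a fin_num) <-> (forall i, Psi i (blk U i x) \is a fin_num).
  move=> x; rewrite /F /Fobj fin_numD /=; split.
    by move=> /sum_fin_numP h i; apply: h => //; exact: mem_index_enum.
  by move=> h; apply/sum_fin_numP => i _ _; exact: h.
have FE : forall x, F x \is a fin_num ->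
    fine (F x) = f x + \sum_i fine (Psi i (blk U i x)).
  move=> x /Ffin h.
  suff -> : F x = (f x + \sum_i fine (Psi i (blk U i x)))%:E by [].
  rewrite /F /Fobj EFinD -sumEFin; congr (_ + _)%E.
  by apply: eq_bigr => i _; rewrite fineK.
have bs : forall i t, blk U i (Ublk U i *m t) = t .
  by move=> i t; apply: blk_self.
have bo : forall i j t, j != i -> blk U j (Ublk U i *m t) = 0 .
  by move=> i j t h; apply: blk_other.
have blk_sum : forall j (G : 'I_n -> 'cV[R]_(\sum_(i < n) Ns i)),
    blk U j (\sum_i G i) = \sum_i blk U j (G i).
  by move=> j G; rewrite /blk mulmx_sumr.
have [z hz] : exists z, forall i, Psi i (blk U i z) \is a fin_num.
  have zsE : forall i, exists zi : 'cV[R]_(Ns i), Psi i zi \is a fin_num.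
    by move=> i; case: (hPsi i) => -[_ h] _ _.
  pose zs i := sval (cid (zsE i)).
  exists (\sum_i Ublk U i *m zs i) => j.
  have -> : blk U j (\sum_i Ublk U i *m zs i) = zs j.
    rewrite blk_sum; apply: (etrans (bigD1 j isT)) => //=.
    have -> : \sum_(i | true && (i != j)) blk U j (Ublk U i *m zs i) = 0.
      by apply: big1 => i ij; apply: bo; rewrite eq_sym.
    by rewrite addr0 bs.
  exact: svalP (cid (zsE j)).
have Fsfin : F xstar \is a fin_num := le_fin ((Ffin z).2 hz) (hmin z) (FNy _).
set c := 1 - (1 - gamma_mu mu) / n%:R.
have gam0 : 0 < gamma_mu mu.
  rewrite /gamma_mu; case: ifP => h; last by rewrite invr_gt0.
  lra.
have n1 : 1 <= (n%:R : R) by rewrite ler1n.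
have c0 : 0 < c.
  rewrite /c subr_gt0 ltr_pdivrMr; last lra.
  lra.
have [x0fin|x0inf] := boolP (F x0 \is a fin_num); last first.
  have -> : F x0 = +oo%E.
    by move: x0inf; rewrite fin_numE FNy /= negbK => /eqP.
  rewrite -(fineK Fsfin) -EFinN addye // mulry gtr0_sg ?exprn_gt0 // mul1e.
  exact: leey.
have Tfin : forall x i, F x \is a fin_num ->
    Psi i (blk U i x + T i x) \is a fin_num /\ Tobj U f Psi B L i x (T i x) \is a fin_num.
  move=> x i /Ffin h.
  have T0 : Tobj U f Psi B L i x 0 = Psi i (blk U i x).
    by rewrite /Tobj inner0r /bnorm /qform mulmx0 inner0r sqrtr0 expr2 !mulr0 !addr0 add0e.
  have Tf : Tobj U f Psi B L i x (T i x) \is a fin_num.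
    apply: (le_fin (h i)); first by rewrite -T0; exact: hT.
    by rewrite /Tobj adde_eq_ninfty negb_or /= PNy.
  split => //; move: Tf; rewrite /Tobj fin_numD /=; exact.
have TE : forall x i (t : 'cV[R]_(Ns i)), Psi i (blk U i x + t) \is a fin_num ->
    fine (Tobj U f Psi B L i x t) =
      inner (blk U i (grad f x)) t + L i / 2 * bnorm (B i) t ^+ 2 + fine (Psi i (blk U i x + t)).
  by move=> x i t h; rewrite /Tobj -{1}(fineK h) -EFinD.
have S3' : forall x y, F x \is a fin_num -> F y \is a fin_num ->
    f x + \sum_i fine (Tobj U f Psi B L i x (T i x)) <= fine (F y) + sqnormL U B L (y - x) / 2.
  move=> x y hx hy.
  have hi : forall i, fine (Tobj U f Psi B L i x (T i x)) <=
      inner (blk U i (grad f x)) (blk U i (y - x)) + L i / 2 * bnorm (B i) (blk U i (y - x)) ^+ 2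
      + fine (Psi i (blk U i y)).
    move=> i.
    have ey : blk U i x + blk U i (y - x) = blk U i y by rewrite -blkD addrC subrK.
    have hyi : Psi i (blk U i x + blk U i (y - x)) \is a fin_num by rewrite ey; exact: (Ffin y).1.
    rewrite -ey -(TE _ _ _ hyi).
    apply: fine_le; [exact: (Tfin x i hx).2 | | exact: hT].
    by rewrite /Tobj fin_numD /= hyi.
  apply: (le_trans (lerD (lexx _) (ler_sum _ (fun i _ => hi i)))).
  rewrite !big_split /= inner_blk // (FE y hy).
  have -> : \sum_i L i / 2 * bnorm (B i) (blk U i (y - x)) ^+ 2 = sqnormL U B L (y - x) / 2.
    by rewrite /sqnormL mulr_suml; apply: eq_bigr => i _; rewrite mulrAC.
  have := conv_grad y cf (df x); rewrite -grad_inner //.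
  lra.
have Sfs : forall x, fine (F xstar) <= fine (F x) \/ ~~ (F x \is a fin_num).
  move=> x; have [hx|] := boolP (F x \is a fin_num); last by right.
  by left; apply: fine_le => //; exact: hmin.
have S3 : forall x, F x \is a fin_num ->
    f x + \sum_i fine (Tobj U f Psi B L i x (T i x)) <=
      fine (F xstar) + gamma_mu mu * (fine (F x) - fine (F xstar)).
  move=> x hx.
  set r := sqnormL U B L (x - xstar).
  have r0 : 0 <= r by apply: sqnormL_ge0 => i; exact: ltW.
  have hxs : fine (F xstar) + mu / 2 * r <= fine (F x).
    have := hsc x xstar _ _ 0.
    rewrite !ltey_eq hx Fsfin => /(_ isT isT).
    have sg : subgrad F xstar 0 by move=> w; rewrite inner0l adde0; exact: hmin.
    move=> /(_ sg); rewrite inner0l adde0 -/F -/r -(fineK Fsfin) -(fineK hx) -EFinD lee_fin.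
    by [].
  have gap : 0 <= fine (F x) - fine (F xstar).
    by rewrite subr_ge0; apply: fine_le => //; exact: hmin.
  have rsym : sqnormL U B L (xstar - x) = r by rewrite -sqnormLN opprB.
  case: (ltrP mu 2) => hmu.
    have gE : gamma_mu mu = 1 - mu / 4 by rewrite /gamma_mu ifT // ltW.
    set a := mu / 2.
    have a01 : 0 < a < 1 by apply/andP; split; rewrite /a; lra.
    set y := a *: xstar + (1 - a) *: x.
    have yx : y - x = a *: (xstar - x).
      by rewrite /y scalerBl scale1r scalerBr addrA addrAC addrK.
    have hPy : forall i, Psi i (blk U i y) \is a fin_num /\
        fine (Psi i (blk U i y)) <= a * fine (Psi i (blk U i xstar)) + (1 - a) * fine (Psi i (blk U i x)).
      move=> i.
      have ha := (Ffin xstar).1 Fsfin i.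
      have hb := (Ffin x).1 hx i.
      have hc : (Psi i (blk U i y) <= (a * fine (Psi i (blk U i xstar)) + (1 - a) * fine (Psi i (blk U i x)))%:E)%E.
        rewrite EFinD !EFinM !fineK // /y blkD !blkZ.
        by case: (hPsi i) => _ _; apply.
      have hf : Psi i (blk U i y) \is a fin_num by apply: (le_fin _ hc); rewrite ?PNy.
      split => //.
      by apply: (fine_le hf _ hc).
    have hy : F y \is a fin_num by apply/Ffin => i; exact: (hPy i).1.
    have hgy : fine (F y) <= a * fine (F xstar) + (1 - a) * fine (F x).
      rewrite (FE y hy) (FE xstar Fsfin) (FE x hx).
      have hf : f y <= a * f xstar + (1 - a) * f x by apply: cf; rewrite !ltW //; case/andP: a01.
      have hs : \sum_i fine (Psi i (blk U i y)) <= a * \sum_i fine (Psi i (blk U i xstar)) +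
          (1 - a) * \sum_i fine (Psi i (blk U i x)).
        rewrite !mulr_sumr -big_split /=; apply: ler_sum => i _; exact: (hPy i).2.
      lra.
    have := S3' x y hx hy; rewrite yx sqnormLZ rsym gE.
    move=> h; apply: (le_trans h).
    rewrite /a in hgy *.
    have : mu / 4 * (fine (F x) - fine (F xstar) - mu / 2 * r) >= 0.
      by apply: mulr_ge0; lra.
    nra.
  have := S3' x xstar hx Fsfin; rewrite rsym => h; apply: (le_trans h).
  have gm : gamma_mu mu * mu >= 1.
    rewrite /gamma_mu; case: ifP => h2; last by rewrite mulVf // gt_eqF.
    have -> : mu = 2 by apply/eqP; rewrite eq_le h2 hmu.
    lra.
  have : mu * (gamma_mu mu * (fine (F x) - fine (F xstar)) - r / 2) >= 0.
    have : gamma_mu mu * mu * (fine (F x) - fine (F xstar)) >= fine (F x) - fine (F xstar).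
      nra.
    nra.
  rewrite pmulr_rge0 //; lra.
have step : forall x, F x \is a fin_num ->
    (forall i, F (x + Ublk U i *m T i x) \is a fin_num) /\
    \sum_i (fine (F (x + Ublk U i *m T i x)) - fine (F xstar)) <=
      n%:R * c * (fine (F x) - fine (F xstar)).
  move=> x hx.
  have bi : forall i, blk U i (x + Ublk U i *m T i x) = blk U i x + T i x.
    by move=> i; rewrite blkD bs.
  have bj : forall i j, j != i -> blk U j (x + Ublk U i *m T i x) = blk U j x.
    by move=> i j ji; rewrite blkD bo // addr0.
  have fst : forall i, F (x + Ublk U i *m T i x) \is a fin_num.
    move=> i; apply/Ffin => j; case: (eqVneq j i) => [->|ji].
      by rewrite bi; exact: (Tfin x i hx).1.
    by rewrite bj //; exact: (Ffin x).1.
  split => //.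
  have hstep : forall i, fine (F (x + Ublk U i *m T i x)) <=
      fine (F x) - fine (Psi i (blk U i x)) + fine (Tobj U f Psi B L i x (T i x)).
    move=> i.
    have [hPi hTi] := Tfin x i hx.
    rewrite (TE _ _ _ hPi) (FE _ (fst i)) (FE _ hx).
    have e1 : \sum_j fine (Psi j (blk U j (x + Ublk U i *m T i x))) =
        fine (Psi i (blk U i x + T i x)) + \sum_(j | true && (j != i)) fine (Psi j (blk U j x)).
      apply: (etrans (bigD1 i isT)) => /=; rewrite bi; congr (_ + _).
      by apply: eq_bigr => j ji; rewrite bj.
    have e2 : \sum_j fine (Psi j (blk U j x)) =
        fine (Psi i (blk U i x)) + \sum_(j | true && (j != i)) fine (Psi j (blk U j x)).
      exact: (bigD1 i isT).
    rewrite e1 e2.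
    have := block_descent x (T i x) (hB i) df (ltW (hL i)) (hLip i).
    lra.
  apply: (le_trans (ler_sum _ (fun i _ => lerB (hstep i) (lexx (fine (F xstar)))))).
  have hsum := S3 x hx.
  have hFE := FE x hx.
  rewrite !big_split /= sumrN sumr_const card_ord.
  rewrite sumrN sumr_const card_ord.
  have e3 : forall y : R, y *+ n = n%:R * y by move=> y; rewrite mulr_natl.
  rewrite (e3 (fine (F x))) (e3 (fine (F xstar))).
  have nc : n%:R * c = n%:R - (1 - gamma_mu mu).
    rewrite /c mulrBr mulr1 mulrCA mulfV ?mulr1 //.
    by rewrite gt_eqF // (lt_le_trans ltr01 n1).
  rewrite nc; nra.
have main : forall k x, F x \is a fin_num ->
    (forall s : k.-tuple 'I_n, F (ucdc_iter U T x s) \is a fin_num) /\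
    (n ^ k)%:R^-1 * \sum_(s : k.-tuple 'I_n) (fine (F (ucdc_iter U T x s)) - fine (F xstar))
      <= c ^+ k * (fine (F x) - fine (F xstar)).
  elim=> [|k' IH] x hx.
    split; first by move=> s; rewrite (tuple0 s).
    rewrite sum_tuple0 expn0 expr0 mul1r invr1 mul1r /=. done.
  have [fst hst] := step x hx.
  split.
    move=> s; rewrite (tuple_eta s).
    exact: ((IH _ (fst (thead s))).1 [tuple of behead s]).
  rewrite sum_tuple_cons.
  have h1 : forall i, (n ^ k')%:R^-1 * \sum_(s : k'.-tuple 'I_n)
      (fine (F (ucdc_iter U T x [tuple of i :: s])) - fine (F xstar)) <=
      c ^+ k' * (fine (F (x + Ublk U i *m T i x)) - fine (F xstar)).
    move=> i; exact: (IH _ (fst i)).2.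
  have nn : (n%:R : R) != 0 by rewrite gt_eqF // (lt_le_trans ltr01 n1).
  rewrite expnS natrM invfM -mulrA mulr_sumr.
  apply: (le_trans (ler_wpM2l _ (ler_sum _ (fun i _ => h1 i)))).
    by rewrite invr_ge0 ler0n.
  rewrite -mulr_sumr exprSr.
  have hc0 : 0 <= c ^+ k' by rewrite exprn_ge0 // ltW.
  have := ler_wpM2l hc0 hst.
  move=> h2.
  apply: (le_trans (ler_wpM2l _ h2)); first by rewrite invr_ge0 ler0n.
  rewrite le_eqVlt; apply/orP; left; apply/eqP; field.
  exact: nn.
have [hfs hle] := main k x0 x0fin.
rewrite /expect_unif.
rewrite (eq_bigr (fun s : k.-tuple 'I_n => (fine (F (ucdc_iter U T x0 s)) - fine (F xstar))%:E)); last first.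
  by move=> s _; rewrite EFinB !fineK.
rewrite sumEFin -EFinM -(fineK x0fin) -(fineK Fsfin) -EFinB -EFinM lee_fin.
exact: hle.
Qed.
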